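(* Let $(B,\lfloor\cdot,\cdot\rfloor)$ be an SSD space with quadratic form $q$ and let $P\subset B$ be $q$-positive. Then $P$ is premaximally $q$-positive if and only if either $\Phi_P(b)\ge q(b)$ for all $b\in B$, or $P^{\pi}$ is an affine subset of $B$.
   Context: An SSD space is a pair $(B,\lfloor\cdot,\cdot\rfloor)$ with $B$ a nonzero real vector space and $\lfloor\cdot,\cdot\rfloor$ a symmetric bilinear form; $q(b)=\frac12\lfloor b,b\rfloor$. A nonempty $A\subset B$ is $q$-positive if $q(b-c)\ge0$ for all $b,c\in A$; maximally $q$-positive if $q$-positive and not properly contained in another $q$-positive set. For $A\subset B$, $A^{\pi}:=\{b\in B: q(b-a)\ge0\ \forall a\in A\}$. For nonempty $A\subset B$, $\Phi_A:B\to\mathbb{R}\cup\{+\infty\}$, $\Phi_A(x)=\sup_{a\in A}\{\lfloor x,a\rfloor-q(a)\}$. A $q$-positive set $P$ is premaximally $q$-positive if there is a unique maximally $q$-positive set containing $P$. *)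

(* Defs.v *)
From HB Require Import structures.
From mathcomp Require Import all_boot all_order all_algebra.
From mathcomp Require Import all_classical all_reals.
From mathcomp Require Import ereal.
Set Implicit Arguments. Unset Strict Implicit. Unset Printing Implicit Defensive.
Import Order.TTheory GRing.Theory Num.Theory.
Local Open Scope ring_scope.
Local Open Scope classical_set_scope.

(* SSD space: a real vector space V (lmodType over a realType R) with a
   symmetric bilinear form bf. *)
Definition sym_bilinear (R : realType) (V : lmodType R) (bf : V -> V -> R) : Prop :=
  (forall u v, bf u v = bf v u) /\
  (forall (a : R) (u v w : V), bf (a *: u + v) w = a * bf u w + bf v w).

Definition qform (R : realType) (V : lmodType R) (bf : V -> V -> R) (b : V) : R :=
  bf b b / 2.

Definition q_positive (R : realType) (V : lmodType R) (bf : V -> V -> R)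
  (A : set V) : Prop :=
  A !=set0 /\ forall b c, A b -> A c -> 0 <= qform bf (b - c).

Definition max_q_positive (R : realType) (V : lmodType R) (bf : V -> V -> R)
  (A : set V) : Prop :=
  q_positive bf A /\ forall A', q_positive bf A' -> A `<=` A' -> A' = A.

Definition pi_set (R : realType) (V : lmodType R) (bf : V -> V -> R)
  (A : set V) : set V :=
  [set b | forall a, A a -> 0 <= qform bf (b - a)].

Definition Phi (R : realType) (V : lmodType R) (bf : V -> V -> R)
  (A : set V) (x : V) : \bar R :=
  ereal_sup [set ((bf x a - qform bf a)%:E) | a in A].

Definition premax_q_positive (R : realType) (V : lmodType R) (bf : V -> V -> R)
  (P : set V) : Prop :=
  q_positive bf P /\
  exists M, [/\ max_q_positive bf M, P `<=` M &
    forall M', max_q_positive bf M' -> P `<=` M' -> M' = M].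

Definition affine_set (R : realType) (V : lmodType R) (A : set V) : Prop :=
  forall x y (t : R), A x -> A y -> A (t *: x + (1 - t) *: y).

(* Main.v *)
Require Import Defs.
From HB Require Import structures.
From mathcomp Require Import all_boot all_order all_algebra.
From mathcomp Require Import all_classical all_reals.
From mathcomp Require Import ereal.
From mathcomp Require Import ring lra.
Set Implicit Arguments. Unset Strict Implicit. Unset Printing Implicit Defensive.
Import Order.TTheory GRing.Theory Num.Theory.
Local Open Scope ring_scope.
Local Open Scope classical_set_scope.

Lemma bf0l (R : realType) (V : lmodType R) (bf : V -> V -> R) :
  sym_bilinear bf -> forall w, bf 0 w = 0.
Proof.
move=> [_ L] w; have := L 1 0 0 w; rewrite scale1r addr0 mul1r => E.
by apply: (addrI (bf 0 w)); rewrite addr0 -E.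
Qed.

Lemma bfDl (R : realType) (V : lmodType R) (bf : V -> V -> R) :
  sym_bilinear bf -> forall u v w, bf (u + v) w = bf u w + bf v w.
Proof. by move=> [_ L] u v w; rewrite -[u]scale1r L mul1r scale1r. Qed.

Lemma bfZl (R : realType) (V : lmodType R) (bf : V -> V -> R) :
  sym_bilinear bf -> forall a u w, bf (a *: u) w = a * bf u w.
Proof.
move=> H a u w; have := H.2 a u 0 w; rewrite addr0 (bf0l H) addr0 //.
Qed.

Lemma bfNl (R : realType) (V : lmodType R) (bf : V -> V -> R) :
  sym_bilinear bf -> forall u w, bf (- u) w = - bf u w.
Proof. by move=> H u w; rewrite -scaleN1r (bfZl H) mulN1r. Qed.

Lemma bfDr (R : realType) (V : lmodType R) (bf : V -> V -> R) :
  sym_bilinear bf -> forall u v w, bf w (u + v) = bf w u + bf w v.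
Proof. by move=> H u v w; rewrite !(H.1 w) (bfDl H). Qed.

Lemma bfZr (R : realType) (V : lmodType R) (bf : V -> V -> R) :
  sym_bilinear bf -> forall a u w, bf w (a *: u) = a * bf w u.
Proof. by move=> H a u w; rewrite !(H.1 w) (bfZl H). Qed.

Lemma bfNr (R : realType) (V : lmodType R) (bf : V -> V -> R) :
  sym_bilinear bf -> forall u w, bf w (- u) = - bf w u.
Proof. by move=> H u w; rewrite !(H.1 w) (bfNl H). Qed.

Lemma qD (R : realType) (V : lmodType R) (bf : V -> V -> R) :
  sym_bilinear bf -> forall u v, qform bf (u + v) = qform bf u + bf u v + qform bf v.
Proof.
move=> H u v; rewrite /qform (bfDl H) !(bfDr H) (H.1 v u).
by field.
Qed.

Lemma qZ (R : realType) (V : lmodType R) (bf : V -> V -> R) :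
  sym_bilinear bf -> forall a u, qform bf (a *: u) = a ^+ 2 * qform bf u.
Proof. move=> H a u; rewrite /qform (bfZl H) (bfZr H); by field. Qed.

Lemma qN (R : realType) (V : lmodType R) (bf : V -> V -> R) :
  sym_bilinear bf -> forall u, qform bf (- u) = qform bf u.
Proof. move=> H u; rewrite /qform (bfNl H) (bfNr H); by rewrite opprK. Qed.

Lemma qB (R : realType) (V : lmodType R) (bf : V -> V -> R) :
  sym_bilinear bf -> forall u v, qform bf (u - v) = qform bf u - bf u v + qform bf v.
Proof. by move=> H u v; rewrite (qD H) (qN H) (bfNr H). Qed.

Lemma qsym (R : realType) (V : lmodType R) (bf : V -> V -> R) :
  sym_bilinear bf -> forall u v, qform bf (u - v) = qform bf (v - u).
Proof. by move=> H u v; rewrite -(qN H) opprB. Qed.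
Definition lc4 (R : realType) (V : lmodType R) (v1 v2 v3 v4 : V) (k1 k2 k3 k4 : R) : V :=
  k1 *: v1 + k2 *: v2 + k3 *: v3 + k4 *: v4.

Lemma lcD (R : realType) (V : lmodType R) (v1 v2 v3 v4 : V) k1 k2 k3 k4 l1 l2 l3 l4 :
  lc4 v1 v2 v3 v4 k1 k2 k3 k4 + lc4 v1 v2 v3 v4 l1 l2 l3 l4 =
  lc4 v1 v2 v3 v4 (k1 + l1) (k2 + l2) (k3 + l3) (k4 + l4).
Proof.
rewrite /lc4 !scalerDl.
rewrite addrACA; congr (_ + _); rewrite addrACA; congr (_ + _).
by rewrite addrACA.
Qed.

Lemma lcN (R : realType) (V : lmodType R) (v1 v2 v3 v4 : V) k1 k2 k3 k4 :
  - lc4 v1 v2 v3 v4 k1 k2 k3 k4 = lc4 v1 v2 v3 v4 (- k1) (- k2) (- k3) (- k4).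
Proof. by rewrite /lc4 !opprD !scaleNr. Qed.

Lemma lcZ (R : realType) (V : lmodType R) (v1 v2 v3 v4 : V) e k1 k2 k3 k4 :
  e *: lc4 v1 v2 v3 v4 k1 k2 k3 k4 = lc4 v1 v2 v3 v4 (e * k1) (e * k2) (e * k3) (e * k4).
Proof. by rewrite /lc4 !scalerDr !scalerA. Qed.

Lemma lc1 (R : realType) (V : lmodType R) (v1 v2 v3 v4 : V) :
  v1 = lc4 v1 v2 v3 v4 1 0 0 0.
Proof. by rewrite /lc4 !scale0r !addr0 scale1r. Qed.
Lemma lc2 (R : realType) (V : lmodType R) (v1 v2 v3 v4 : V) :
  v2 = lc4 v1 v2 v3 v4 0 1 0 0.
Proof. by rewrite /lc4 !scale0r !addr0 add0r scale1r. Qed.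
Lemma lc3 (R : realType) (V : lmodType R) (v1 v2 v3 v4 : V) :
  v3 = lc4 v1 v2 v3 v4 0 0 1 0.
Proof. by rewrite /lc4 !scale0r !addr0 !add0r scale1r. Qed.
Lemma lc4' (R : realType) (V : lmodType R) (v1 v2 v3 v4 : V) :
  v4 = lc4 v1 v2 v3 v4 0 0 0 1.
Proof. by rewrite /lc4 !scale0r !add0r scale1r. Qed.

Ltac lcnorm v1 v2 v3 v4 :=
  let B1 := fresh "B" in let B2 := fresh "B" in
  let B3 := fresh "B" in let B4 := fresh "B" in
  let e1 := fresh "e" in let e2 := fresh "e" in
  let e3 := fresh "e" in let e4 := fresh "e" in
  set B1 := v1; set B2 := v2; set B3 := v3; set B4 := v4;
  have e1 : B1 = lc4 v1 v2 v3 v4 1 0 0 0 := lc1 v1 v2 v3 v4;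
  have e2 : B2 = lc4 v1 v2 v3 v4 0 1 0 0 := lc2 v1 v2 v3 v4;
  have e3 : B3 = lc4 v1 v2 v3 v4 0 0 1 0 := lc3 v1 v2 v3 v4;
  have e4 : B4 = lc4 v1 v2 v3 v4 0 0 0 1 := lc4' v1 v2 v3 v4;
  rewrite ?e1 ?e2 ?e3 ?e4; clear e1 e2 e3 e4;
  rewrite /B1 /B2 /B3 /B4; clear B1 B2 B3 B4;
  rewrite ?lcN ?lcZ ?lcD ?lcN ?lcZ ?lcD ?lcN ?lcZ ?lcD ?lcN ?lcZ ?lcD ?lcN ?lcZ ?lcD ?lcN ?lcZ ?lcD.

Lemma q0 (R : realType) (V : lmodType R) (bf : V -> V -> R) :
  sym_bilinear bf -> forall b, qform bf (b - b) = 0.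
Proof. by move=> H b; rewrite subrr /qform (bf0l H) mul0r. Qed.

Lemma P_sub_pi (R : realType) (V : lmodType R) (bf : V -> V -> R) (P : set V) :
  q_positive bf P -> P `<=` pi_set bf P.
Proof. by move=> [_ QP] b Pb a Pa; exact: QP. Qed.

Lemma pi_premax (R : realType) (V : lmodType R) (bf : V -> V -> R) (P : set V) :
  q_positive bf P -> q_positive bf (pi_set bf P) -> premax_q_positive bf P.
Proof.
move=> QP Qpi; split => //.
have sub : forall A, q_positive bf A -> P `<=` A -> A `<=` pi_set bf P.
  by move=> A [_ QA] PA b Ab a Pa; apply: QA => //; exact: PA.
exists (pi_set bf P); split.
- split => // A' QA' piA'; apply/seteqP; split => //.
  apply: sub => //; exact: subset_trans (P_sub_pi QP) piA'.
- exact: P_sub_pi.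
- move=> M' [QM' maxM'] PM'.
  by apply/esym/maxM' => //; exact: sub.
Qed.

Lemma extend_max (R : realType) (V : lmodType R) (bf : V -> V -> R) (Q : set V) :
  q_positive bf Q -> exists M, max_q_positive bf M /\ Q `<=` M.
Proof.
move=> [Qn QQ].
pose PS := [set A : set V | forall b c, (A `|` Q) b -> (A `|` Q) c -> 0 <= qform bf (b - c)].
have [A [PA Amax]] : exists A, PS A /\ forall B, A `<` B -> ~ PS B.
  apply: Zorn_bigcup => F FP Ftot b c.
  have memb : forall y, (\bigcup_(X in F) X `|` Q) y ->
      Q y \/ exists2 X, F X & X y.
    by move=> y [[X FX Xy]|Qy]; [right; exists X|left].
  move=> /memb [Qb|[X FX Xb]] /memb [Qc|[Y FY Yc]].
  - exact: QQ.
  - by apply: (FP Y FY); [right|left].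
  - by apply: (FP X FX); [left|right].
  - have [XY|YX] := Ftot X Y FX FY.
    + by apply: (FP Y FY); left => //; exact: XY.
    + by apply: (FP X FX); left => //; exact: YX.
exists (A `|` Q); split; last by move=> y Qy; right.
split; first split.
- by case: Qn => y Qy; exists y; right.
- exact: PA.
move=> A' [_ QA'] AQA'.
have PA' : PS A'.
  move=> b c; rewrite (_ : A' `|` Q = A'); first exact: QA'.
  by apply/seteqP; split => [y [//|Qy]|y Ay]; [apply: AQA'; right|left].
have AA' : A `<=` A' by move=> y Ay; apply: AQA'; left.
have : ~ (A `<` A') by move=> /Amax.
move=> nprop; apply/seteqP; split => //.
move=> y A'y.
case: (pselect (A' `<=` A)) => [A'A|nA'A]; first by left; exact: A'A.
by exfalso; apply: nprop; split.
Qed.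

Lemma premax_pi (R : realType) (V : lmodType R) (bf : V -> V -> R) (P : set V) :
  sym_bilinear bf -> premax_q_positive bf P -> q_positive bf (pi_set bf P).
Proof.
move=> H [QP [M [MM PM Muniq]]].
have ext : forall b, pi_set bf P b -> M b.
  move=> b pib.
  have Qb : q_positive bf (P `|` [set b]).
    split; first by exists b; right.
    move=> u v [Pu|->] [Pv|->].
    - exact: QP.2.
    - by rewrite (qsym H); exact: pib.
    - exact: pib.
    - by rewrite (q0 H).
  have [Mb [MMb sub]] := extend_max Qb.
  have -> : M = Mb by apply/esym/Muniq => // y Py; apply: sub; left.
  by apply: sub; right.
split; first by case: QP.1 => y Py; exists y; exact: P_sub_pi.
by move=> b c /ext Mb /ext Mc; exact: MM.1.2.
Qed.

Lemma Phi_case (R : realType) (V : lmodType R) (bf : V -> V -> R) (P : set V) :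
  sym_bilinear bf -> q_positive bf P ->
  (forall b : V, ((qform bf b)%:E <= Phi bf P b)%E) -> q_positive bf (pi_set bf P).
Proof.
move=> H QP HPhi.
split; first by case: QP.1 => y Py; exists y; exact: P_sub_pi.
move=> b c pib pic.
rewrite leNgt; apply/negP => neg.
set m := 2^-1 *: (b + c).
set h := 2^-1 *: (b - c).
have key : forall a, P a -> - qform bf (b - c) / 4 <= qform bf (m - a).
  move=> a Pa.
  have e1 : b - a = (m - a) + h by rewrite /m /h; lcnorm b c a a; congr lc4; field.
  have e2 : c - a = (m - a) - h by rewrite /m /h; lcnorm b c a a; congr lc4; field.
  have hb := pib a Pa; have hc := pic a Pa.
  rewrite e1 (qD H) in hb; rewrite e2 (qB H) in hc.
  have qh : qform bf h = qform bf (b - c) / 4.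
    by rewrite /h (qZ H); field.
  rewrite qh in hb hc; lra.
have := HPhi m.
have : (Phi bf P m <= (qform bf m + qform bf (b - c) / 4)%:E)%E.
  apply: ge_ereal_sup => _ [a Pa <-]; rewrite lee_fin.
  have := key a Pa; rewrite (qB H) (qsym H) (qB H).
  rewrite /qform (H.1 a m); lra.
move=> le1 le2; have := le_trans le2 le1; rewrite lee_fin; lra.
Qed.

Lemma affine_case (R : realType) (V : lmodType R) (bf : V -> V -> R) (P : set V) :
  sym_bilinear bf -> q_positive bf P ->
  affine_set (pi_set bf P) -> q_positive bf (pi_set bf P).
Proof.
move=> H QP Haff.
case: (QP.1) => a Pa.
split; first by exists a; exact: P_sub_pi.
move=> b c pib pic.
rewrite leNgt; apply/negP => neg.
set p := c - a. set h := b - c.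
set B := bf p h.
have ht : forall t, 0 <= qform bf p + t * B + t ^+ 2 * qform bf h.
  move=> t; have := Haff b c t pib pic a Pa.
  have -> : t *: b + (1 - t) *: c - a = p + t *: h.
    by rewrite /p /h; lcnorm b c a a; congr lc4; ring.
  by rewrite (qD H) (qZ H) (bfZr H).
set A := - qform bf h.
have Apos : 0 < A by rewrite /A oppr_gt0.
set t := (`|qform bf p| + `|B|) / A + 1.
have tA : t * A = `|qform bf p| + `|B| + A.
  by rewrite /t mulrDl divfK ?mul1r // gt_eqF.
have t1 : 1 <= t.
  by rewrite /t lerDr divr_ge0 // ?addr_ge0 // ltW.
have := ht t.
have e1 := ler_norm (qform bf p); have e2 := ler_norm B.
have e3 := normr_ge0 (qform bf p); have e4 := normr_ge0 B.
have hA : qform bf h = - A by rewrite /A opprK.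
rewrite hA.
have e5 : t * B <= t * `|B| by rewrite ler_wpM2l // (le_trans ler01).
have e6 : `|qform bf p| <= t * `|qform bf p|.
  by rewrite ler_peMl.
nra.
Qed.

Lemma ex_eps (R : realType) (C D E d : R) :
  0 <= C -> 0 <= D -> 0 <= E -> 0 < d ->
  exists e, [/\ 0 < e, e <= 1, 4 * (e * C) <= 1 & 4 * (e * (D + E)) <= d].
Proof.
move=> C0 D0 E0 d0.
set Z := 4 * ((C + 1) * d + D + E).
have Z0 : 0 < Z by rewrite /Z; nra.
exists (d / Z).
have eZ : d / Z * Z = d by rewrite divfK // gt_eqF.
have e0 : 0 < d / Z by rewrite divr_gt0.
move: eZ e0; set e := d / Z => eZ e0.
rewrite /Z in eZ.
have eZ' : 4 * (e * C * d) + 4 * (e * d) + 4 * (e * D) + 4 * (e * E) = d.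
  by rewrite -[RHS]eZ; ring.
have eE : 0 <= e * E by rewrite mulr_ge0 // ltW.
have eD : 0 <= e * D by rewrite mulr_ge0 // ltW.
have eCd : 0 <= e * C * d by apply: mulr_ge0; [apply: mulr_ge0 => //; exact: ltW | exact: ltW].
have ed : 0 <= e * d by rewrite mulr_ge0 // ltW.
have h1 : (4 * (e * C)) * d <= 1 * d by rewrite mul1r -mulrA; lra.
have h2 : (4 * e) * d <= 1 * d by rewrite mul1r -mulrA; lra.
rewrite ler_pM2r // in h1; rewrite ler_pM2r // in h2.
split => //; try lra.
Qed.

Definition Kp (R : realType) (V : lmodType R) (bf : V -> V -> R) (P : set V)
  (x : V) (C D : R) (s : V) :=
  [/\ 0 <= C, 0 <= D & forall a, P a -> - C * qform bf (x - a) - D <= bf (x - a) s].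

Lemma main_C (R : realType) (V : lmodType R) (bf : V -> V -> R) (P : set V)
  (x : V) (d : R) :
  sym_bilinear bf -> q_positive bf P -> q_positive bf (pi_set bf P) ->
  0 < d -> (forall a, P a -> d <= qform bf (x - a)) -> affine_set (pi_set bf P).
Proof.
move=> H QP QM d0 Hx.
have qw0 : forall a, P a -> 0 <= qform bf (x - a).
  by move=> a Pa; apply: le_trans (Hx a Pa); exact: ltW.
have Mx : pi_set bf P x by [].
have KL : forall y, pi_set bf P y -> Kp bf P x 1 (qform bf (y - x)) (y - x).
  move=> y My; split => //; first exact: QM.2.
  move=> a Pa; have := My a Pa.
  have -> : y - a = (x - a) + (y - x) by rewrite [RHS]addrC addrA subrK.
  rewrite (qD H); lra.
have Kadd : forall C1 D1 s1 C2 D2 s2, Kp bf P x C1 D1 s1 -> Kp bf P x C2 D2 s2 ->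
    Kp bf P x (C1 + C2) (D1 + D2) (s1 + s2).
  move=> C1 D1 s1 C2 D2 s2 [c1 d1 k1] [c2 d2 k2]; split; try exact: addr_ge0.
  move=> a Pa; rewrite (bfDr H); have := k1 a Pa; have := k2 a Pa; lra.
have Kscale : forall e C D s, 0 <= e -> Kp bf P x C D s ->
    Kp bf P x (e * C) (e * D) (e *: s).
  move=> e C D s e0 [c0 dd0 k]; split; try exact: mulr_ge0.
  move=> a Pa; rewrite (bfZr H); have := k a Pa => ka.
  have := ler_wpM2l e0 ka; lra.
have Kweak : forall C D C' D' s, Kp bf P x C D s -> C <= C' -> D <= D' ->
    Kp bf P x C' D' s.
  move=> C D C' D' s [c0 dd0 k] CC DD; split; try exact: le_trans CC.
    exact: le_trans DD.
  move=> a Pa; have := k a Pa; have := qw0 a Pa => q0' ka.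
  have : C * qform bf (x - a) <= C' * qform bf (x - a) by rewrite ler_wpM2r.
  lra.
have Ksmall : forall C D s e, Kp bf P x C D s -> 0 < e -> e <= 1 ->
    4 * (e * C) <= 1 -> 4 * (e * (D + `|qform bf s|)) <= d ->
    pi_set bf P (x + e *: s).
  move=> C D s e [c0 dd0 k] e0 e1 eC eD a Pa.
  have -> : x + e *: s - a = (x - a) + e *: s by rewrite addrAC.
  rewrite (qD H) (qZ H) (bfZr H).
  have ka := k a Pa; have hx := Hx a Pa.
  have f1 := ler_wpM2l (ltW e0) ka.
  have f2 : (e * C) * qform bf (x - a) <= 4^-1 * qform bf (x - a).
    by apply: ler_wpM2r; [exact: qw0 | lra].
  have f3 := ler_norm (- qform bf s); rewrite normrN in f3.
  have f4 : e ^+ 2 * `|qform bf s| <= e * `|qform bf s|.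
    have en : 0 <= e * `|qform bf s| by rewrite mulr_ge0 ?normr_ge0 // ltW.
    have : e * (e * `|qform bf s|) <= 1 * (e * `|qform bf s|) by rewrite ler_wpM2r.
    by rewrite mul1r mulrA -expr2.
  have f5 : - (e ^+ 2 * `|qform bf s|) <= e ^+ 2 * qform bf s.
    by have := sqr_ge0 e; nra.
  nra.
move=> b c t Mb Mc a Pa.
have Ma : pi_set bf P a := P_sub_pi QP Pa.
set vb := b - x; set vc := c - x; set va := a - x.
set sp := `|t| *: vb + `|1 - t| *: vc.
set sm := (`|t| - t) *: vb + (`|1 - t| - (1 - t)) *: vc + va.
have Ksp := Kadd _ _ _ _ _ _ (Kscale `|t| _ _ _ (normr_ge0 _) (KL b Mb))
                             (Kscale `|1 - t| _ _ _ (normr_ge0 _) (KL c Mc)).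
have ge1 : 0 <= `|t| - t by rewrite subr_ge0 ler_norm.
have ge2 : 0 <= `|1 - t| - (1 - t) by rewrite subr_ge0 ler_norm.
have Ksm := Kadd _ _ _ _ _ _ (Kadd _ _ _ _ _ _ (Kscale _ _ _ _ ge1 (KL b Mb))
                             (Kscale _ _ _ _ ge2 (KL c Mc))) (KL a Ma).
move: Ksp Ksm; rewrite -/vb -/vc -/va -/sp -/sm.
set C1 := (X in Kp _ _ _ X _ sp); set D1 := (X in Kp _ _ _ _ X sp).
set C2 := (X in Kp _ _ _ X _ sm); set D2 := (X in Kp _ _ _ _ X sm).
move=> Ksp Ksm.
have [c1 d1 _] := Ksp; have [c2 d2 _] := Ksm.
have [e [e0 e1 eC eD]] := ex_eps (addr_ge0 c1 c2) (addr_ge0 d1 d2)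
   (addr_ge0 (normr_ge0 (qform bf sp)) (normr_ge0 (qform bf sm))) d0.
have n1 := normr_ge0 (qform bf sp); have n2 := normr_ge0 (qform bf sm).
have Mp : pi_set bf P (x + e *: sp).
  apply: (Ksmall (C1 + C2) (D1 + D2)) => //.
    by apply: Kweak Ksp _ _; lra.
  nra.
have Mm : pi_set bf P (x + e *: sm).
  apply: (Ksmall (C1 + C2) (D1 + D2)) => //.
    by apply: Kweak Ksm _ _; lra.
  nra.
have := QM.2 _ _ Mp Mm.
have -> : x + e *: sp - (x + e *: sm) = e *: (t *: b + (1 - t) *: c - a).
  by rewrite /sp /sm /vb /vc /va; lcnorm b c x a; congr lc4; ring.
rewrite (qZ H) => h.
have e2 : 0 < e ^+ 2 by rewrite exprn_gt0.
by rewrite -(pmulr_rge0 _ e2).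
Qed.

Theorem mainTheorem3 (R : realType) (V : lmodType R) (bf : V -> V -> R)
  (P : set V) :
  (exists v : V, v != 0) -> sym_bilinear bf -> q_positive bf P ->
  (premax_q_positive bf P <->
   ((forall b : V, ((qform bf b)%:E <= Phi bf P b)%E) \/ affine_set (pi_set bf P))).
Proof.
move=> _ H QP; split.
- move=> PM; have Qpi := premax_pi H PM.
  case: (pselect (forall b : V, ((qform bf b)%:E <= Phi bf P b)%E)) => [h|nh].
    by left.
  right; move/existsNP: nh => [x hx].
  have hlt : (Phi bf P x < (qform bf x)%:E)%E by rewrite ltNge; apply/negP.
  have ub : forall a, P a -> ((bf x a - qform bf a)%:E <= Phi bf P x)%E.
    by move=> a Pa; apply: ereal_sup_ubound; exists a.
  case: (QP.1) => a0 Pa0.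
  move: hlt ub; case E: (Phi bf P x) => [r| |] hlt ub.
  + rewrite lte_fin in hlt.
    apply: (@main_C _ _ bf P x (qform bf x - r)) => //; first by rewrite subr_gt0.
    move=> a Pa; have := ub a Pa; rewrite lee_fin (qB H) /qform (H.1 x a); lra.
  + by move: hlt; rewrite ltNge leey.
  + by have := ub a0 Pa0; rewrite leeNy_eq.
- case=> [h|h]; apply: pi_premax => //.
    exact: Phi_case.
  exact: affine_case.
Qed.
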